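(* Consider $\partial_t x = F_2 x^{\otimes 2}+F_1x+F_0$, and let $Q=I$ and pivot $s=x(0)$, so that $v(t)=x(t)-x(0)$ solves $\partial_tv=F_{2,s}v^{\otimes2}+F_{1,s}v+F_{0,s}$. Then $v(0)=0$, and there exists $t'>0$ such that $\|v(t)\|\le1$ for $t\le T\le t'$. In particular one may choose $t'=\frac{1}{\|F_{2,s}\|+\|F_{1,s}\|+\|F_{0,s}\|}$, and then for all $t<t'$, $$\|v(t)\|\le t\big(\|F_{2,s}\|+\|F_{1,s}\|+\|F_{0,s}\|\big)<1.$$
   Context: Setting: $x(t)\in\mathbb{R}^n$, $F_2\in\mathbb{R}^{n\times n^2}$, $F_1\in\mathbb{R}^{n\times n}$, $F_0\in\mathbb{R}^n$, Kronecker product $\otimes$; $F_{2,s}=F_2$, $F_{1,s}=F_1+F_2(s\otimes I_n+I_n\otimes s)$, $F_{0,s}=F_2s^{\otimes2}+F_1s+F_0$; $\|\cdot\|$ is the Euclidean norm / induced operator norm; $t\ge0$. *)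

(* Defs.v *)
From HB Require Import structures.
From mathcomp Require Import all_boot all_order all_algebra.
From mathcomp Require Import all_classical all_reals all_analysis.
Set Implicit Arguments. Unset Strict Implicit. Unset Printing Implicit Defensive.
Import Order.TTheory GRing.Theory Num.Theory.
Import numFieldNormedType.Exports.
Local Open Scope ring_scope.
Local Open Scope classical_set_scope.

Section Defs.
Variable R : realType.

Definition enorm (m n : nat) (A : 'M[R]_(m, n)) : R :=
  Num.sqrt (\sum_i \sum_j A i j ^+ 2).

Definition opnorm (m n : nat) (A : 'M[R]_(m, n)) : R :=
  sup [set enorm (A *m x) | x in [set x : 'cV[R]_n | enorm x <= 1]].

(* Kronecker product: (A (x) B) at row (i1,i2), column (j1,j2) equals
   A i1 j1 * B i2 j2, with pairs enumerated lexicographically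
   (mxvec_index i1 i2 = i1 * m2 + i2). *)
(* Inverse of mxvec_index: the pair (i, j) indexed by k : 'I_(m * n). *)
Definition unvec_index (m n : nat) (k : 'I_(m * n)) : 'I_m * 'I_n :=
  enum_val (cast_ord (esym (mxvec_cast m n)) k).

Definition kron (m1 n1 m2 n2 : nat) (A : 'M[R]_(m1, n1)) (B : 'M[R]_(m2, n2))
  : 'M[R]_(m1 * m2, n1 * n2) :=
  \matrix_(i, j) (A (unvec_index i).1 (unvec_index j).1 *
                  B (unvec_index i).2 (unvec_index j).2).
End Defs.

Definition kronv (R : realType) (n : nat) (x y : 'cV[R]_n) : 'cV[R]_(n * n) :=
  castmx (erefl, muln1 1) (kron x y).

Definition kron_vI (R : realType) (n : nat) (s : 'cV[R]_n) : 'M[R]_(n * n, n) :=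
  castmx (erefl, mul1n n) (kron s (1%:M : 'M[R]_n)).
Definition kron_Iv (R : realType) (n : nat) (s : 'cV[R]_n) : 'M[R]_(n * n, n) :=
  castmx (erefl, muln1 n) (kron (1%:M : 'M[R]_n) s).

Definition F2s (R : realType) (n : nat) (F2 : 'M[R]_(n, n * n)) := F2.
Definition F1s (R : realType) (n : nat) (F2 : 'M[R]_(n, n * n)) (F1 : 'M[R]_n)
  (s : 'cV[R]_n) : 'M[R]_n :=
  F1 + F2 *m (kron_vI s + kron_Iv s).
Definition F0s (R : realType) (n : nat) (F2 : 'M[R]_(n, n * n)) (F1 : 'M[R]_n)
  (F0 : 'cV[R]_n) (s : 'cV[R]_n) : 'cV[R]_n :=
  F2 *m kronv s s + F1 *m s + F0.

(* Main.v *)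
Require Import Defs.
From HB Require Import structures.
From mathcomp Require Import all_boot all_order all_algebra.
From mathcomp Require Import all_classical all_reals all_analysis.
From mathcomp Require Import ring lra.
Import Order.TTheory GRing.Theory Num.Theory.
Import numFieldNormedType.Exports.
Local Open Scope ring_scope.
Local Open Scope classical_set_scope.
Section Norms.
Context {R : realType} {n : nat}.
Implicit Types a b c : 'cV[R]_n.

Definition dot a b := \sum_i a i 0 * b i 0.

Lemma dot_ge0 a : 0 <= dot a a.
Proof. by apply: sumr_ge0 => i _; rewrite -expr2 sqr_ge0. Qed.

Lemma enormE a : enorm a = Num.sqrt (dot a a).
Proof. by rewrite /enorm /dot; congr Num.sqrt; apply: eq_bigr => i _; rewrite big_ord1 expr2. Qed.

Lemma enorm_ge0 a : 0 <= enorm a.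
Proof. by rewrite enormE sqrtr_ge0. Qed.

Lemma enorm_sq a : enorm a ^+ 2 = dot a a.
Proof. by rewrite enormE sqr_sqrtr // dot_ge0. Qed.

Lemma dotC a b : dot a b = dot b a.
Proof. by apply: eq_bigr => i _; rewrite mulrC. Qed.

Lemma dotDr a b c : dot a (b + c) = dot a b + dot a c.
Proof. by rewrite /dot -big_split; apply: eq_bigr => i _; rewrite mxE mulrDr. Qed.

Lemma dotNl a b : dot (- a) b = - dot a b.
Proof. by rewrite /dot -sumrN; apply: eq_bigr => i _; rewrite mxE mulNr. Qed.

Lemma dotBr a b c : dot a (b - c) = dot a b - dot a c.
Proof. by rewrite dotDr (dotC a (- c)) dotNl (dotC c a). Qed.

Lemma dotZl k a b : dot (k *: a) b = k * dot a b.
Proof. by rewrite /dot big_distrr; apply: eq_bigr => i _; rewrite mxE -mulrA. Qed.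

Lemma dot0r a : dot a 0 = 0.
Proof. by rewrite /dot big1 // => i _; rewrite mxE mulr0. Qed.

Lemma dot0_eq a : dot a a = 0 -> a = 0.
Proof.
move=> /eqP; rewrite psumr_eq0; last by move=> i _; rewrite -expr2 sqr_ge0.
move=> /allP H; apply/matrixP => i j; rewrite (ord1 j) mxE.
by have := H i (mem_index_enum i); rewrite -expr2 sqrf_eq0 => /eqP.
Qed.

Lemma enorm0_eq a : enorm a = 0 -> a = 0.
Proof. by move=> h; apply: dot0_eq; rewrite -enorm_sq h expr0n. Qed.

Lemma enorm0 : enorm (0 : 'cV[R]_n) = 0.
Proof. by rewrite enormE dot0r sqrtr0. Qed.

Lemma CS a b : dot a b <= enorm a * enorm b.
Proof.
have [ha|ha] := eqVneq (enorm a) 0.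
  by rewrite ha mul0r (enorm0_eq _ ha) dotC dot0r.
have [hb|hb] := eqVneq (enorm b) 0.
  by rewrite hb mulr0 (enorm0_eq _ hb) dot0r.
have pa : 0 < enorm a by rewrite lt_neqAle eq_sym ha enorm_ge0.
have pb : 0 < enorm b by rewrite lt_neqAle eq_sym hb enorm_ge0.
set l := enorm b / enorm a.
have lp : 0 < l by rewrite divr_gt0.
have key : 2 * dot a b <= l * dot a a + l^-1 * dot b b.
  rewrite /dot big_distrr big_distrr /= big_distrr /= -big_split /=.
  apply: ler_sum => i _.
  have -> : l * (a i 0 * a i 0) + l^-1 * (b i 0 * b i 0) =
     2 * (a i 0 * b i 0) + l^-1 * (l * a i 0 - b i 0) ^+ 2.
    by field; rewrite gt_eqF.
  by rewrite lerDl mulr_ge0 // ?sqr_ge0 // invr_ge0 ltW.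
have : l * dot a a + l^-1 * dot b b = 2 * (enorm a * enorm b).
  rewrite -!enorm_sq /l; field; by rewrite !gt_eqF.
move=> e; rewrite e in key; by rewrite -(ler_pM2l (_ : 0 < 2)).
Qed.

Lemma CSabs a b : `|dot a b| <= enorm a * enorm b.
Proof.
rewrite ler_norml CS andbT lerNl -dotNl.
have -> : enorm a = enorm (- a) by rewrite !enormE dotNl dotC dotNl opprK.
exact: CS.
Qed.

Lemma enormD a b : enorm (a + b) <= enorm a + enorm b.
Proof.
rewrite enormE -(ger0_norm (addr_ge0 (enorm_ge0 a) (enorm_ge0 b))) -sqrtr_sqr ler_sqrt ?sqr_ge0 //.
rewrite dotDr (dotC (a + b) a) (dotC (a + b) b) !dotDr sqrrD -!enorm_sq (dotC b a).
have := CS a b; lra.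
Qed.

Lemma enormN a : enorm (- a) = enorm a.
Proof. by rewrite !enormE dotNl dotC dotNl opprK. Qed.

Lemma enormZ k a : enorm (k *: a) = `|k| * enorm a.
Proof.
rewrite !enormE dotZl dotC dotZl mulrA sqrtrM ?sqr_ge0 // -expr2 sqrtr_sqr //.
Qed.

Lemma enormB_ge a b : `|enorm a - enorm b| <= enorm (a - b).
Proof.
rewrite ler_norml; apply/andP; split.
  have := enormD (b - a) a; rewrite subrK -opprB enormN; lra.
have := enormD (a - b) b; rewrite subrK; lra.
Qed.

Lemma entry_le_mxnorm a i : `|a i 0| <= `|a|.
Proof.
have -> : `|a| = mx_norm a by []. rewrite mx_normrE; apply/bigmax_geP; right => /=.
by exists (i, 0).
Qed.

Lemma enorm_le_mx a : enorm a <= n%:R * `|a|.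
Proof.
rewrite enormE -(ger0_norm (mulr_ge0 (ler0n _ n) (normr_ge0 a))) -sqrtr_sqr ler_sqrt ?sqr_ge0 //.
apply: (@le_trans _ _ (n%:R * `|a| ^+ 2)).
  rewrite /dot mulr_natl.
  have -> : `|a| ^+ 2 *+ n = \sum_(i < n) `|a| ^+ 2 by rewrite sumr_const card_ord.
  apply: ler_sum => i _.
  rewrite -expr2 -real_normK ?num_real //; apply: lerXn2r; rewrite ?nnegrE //.
  exact: entry_le_mxnorm.
rewrite exprMn ler_wpM2r ?sqr_ge0 //.
case: n => [|m]; first by rewrite expr0n.
by rewrite -natrX ler_nat expnS leq_pmulr.
Qed.

End Norms.

Section Op.
Context {R : realType}.

Lemma frob m k (A : 'M[R]_(m, k)) (y : 'cV[R]_k) :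
  enorm (A *m y) <= enorm A * enorm y.
Proof.
rewrite enormE [enorm A]/enorm enormE -sqrtrM; last by do 2 (apply: sumr_ge0 => ? _); exact: sqr_ge0.
rewrite ler_sqrt; last by apply: mulr_ge0; [do 2 (apply: sumr_ge0 => ? _); exact: sqr_ge0|exact: dot_ge0].
rewrite /dot big_distrl /=; apply: ler_sum => i _.
pose r : 'cV[R]_k := \col_j A i j.
have e1 : (A *m y) i 0 = dot r y by rewrite mxE; apply: eq_bigr => j _; rewrite mxE.
have e2 : \sum_j A i j ^+ 2 = dot r r by apply: eq_bigr => j _; rewrite mxE expr2.
rewrite e1 e2 -/(dot y y) -!enorm_sq -exprMn -expr2 -real_normK ?num_real //.
apply: lerXn2r; rewrite ?nnegrE ?mulr_ge0 ?enorm_ge0 //; exact: CSabs.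
Qed.
Arguments frob {m k}.

Lemma opnorm_ub m k (A : 'M[R]_(m, k)) (y : 'cV[R]_k) :
  enorm y <= 1 -> enorm (A *m y) <= opnorm A.
Proof.
move=> hy; apply: ub_le_sup; last by exists y.
exists (enorm A) => z [x /= hx <-].
apply: (le_trans (frob A x)).
have h2 : 0 <= enorm A := sqrtr_ge0 _.
by rewrite -[leRHS]mulr1 ler_wpM2l.
Qed.

Lemma opnorm_ge0 m k (A : 'M[R]_(m, k)) : 0 <= opnorm A.
Proof.
have h := @opnorm_ub m k A 0; rewrite mulmx0 !enorm0 in h; exact: h ler01.
Qed.

Lemma opnorm_bound m k (A : 'M[R]_(m, k)) (y : 'cV[R]_k) :
  enorm (A *m y) <= opnorm A * enorm y.
Proof.
have [e0|e0] := eqVneq (enorm y) 0.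
  by rewrite e0 mulr0 (enorm0_eq _ e0) mulmx0 enorm0.
have ep : 0 < enorm y by rewrite lt_neqAle eq_sym e0 enorm_ge0.
have := @opnorm_ub m k A ((enorm y)^-1 *: y).
rewrite enormZ ger0_norm ?invr_ge0 ?enorm_ge0 // mulVf // lexx -scalemxAr enormZ.
rewrite ger0_norm ?invr_ge0 ?enorm_ge0 // => /(_ isT).
by rewrite ler_pdivrMl // mulrC.
Qed.

End Op.
Arguments opnorm_ub {R m k}.
Arguments opnorm_ge0 {R m k}.
Arguments opnorm_bound {R m k}.


Lemma e1 n : enum {: 'I_1 * 'I_n} = [seq (ord0, j) | j <- enum 'I_n].
Proof. by rewrite enumT unlock /= /prod_enum enum_ordSl enum_ord0 /= cats0. Qed.

Lemma e2 n : enum {: 'I_n * 'I_1} = [seq (j, ord0) | j <- enum 'I_n].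
Proof.
rewrite enumT unlock /= /prod_enum enum_ordSl enum_ord0 /=.
by elim: (enum 'I_n) => //= a s ->.
Qed.

Lemma r1 n (k : 'I_n) : nat_of_ord (enum_rank (@ord0 0, k)) = k.
Proof.
have := nth_enum_rank (@ord0 0, k) (@ord0 0, k). rewrite e1.
set r := enum_rank _.
have rn : (r < n)%N by have := ltn_ord r; move: (nat_of_ord r) => k0; rewrite card_prod !card_ord mul1n.
rewrite (nth_map k) ?size_enum_ord // => -[] <-. by rewrite nth_enum_ord.
Qed.

Lemma r2 n (k : 'I_n) : nat_of_ord (enum_rank (k, @ord0 0)) = k.
Proof.
have := nth_enum_rank (k, @ord0 0) (k, @ord0 0). rewrite e2.
set r := enum_rank _.
have rn : (r < n)%N by have := ltn_ord r; move: (nat_of_ord r) => k0; rewrite card_prod !card_ord muln1.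
rewrite (nth_map k) ?size_enum_ord // => -[] <-. by rewrite nth_enum_ord.
Qed.

Lemma unvec_mxvec m n (i : 'I_m) (j : 'I_n) : unvec_index (mxvec_index i j) = (i, j).
Proof. by rewrite /unvec_index /mxvec_index cast_ordK enum_rankK. Qed.

Lemma mxvec_unvec m n (c : 'I_(m * n)) :
  mxvec_index (unvec_index c).1 (unvec_index c).2 = c.
Proof. by case/mxvec_indexP: c => i j; rewrite unvec_mxvec. Qed.

Lemma sum_unvec (R : realType) m n (F : 'I_m * 'I_n -> R) :
  \sum_(c : 'I_(m * n)) F (unvec_index c) = \sum_(i < m) \sum_(j < n) F (i, j).
Proof.
have hb : bijective (fun p : 'I_m * 'I_n => mxvec_index p.1 p.2).
  by exists (@unvec_index m n) => [[i j]|c]; rewrite ?unvec_mxvec ?mxvec_unvec.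
rewrite (reindex _ (onW_bij _ hb)) pair_big /=.
by apply: eq_bigr => -[i j] _; rewrite unvec_mxvec.
Qed.

Lemma unvec1 n (c : 'I_(1 * n)) : unvec_index c = (ord0, cast_ord (mul1n n) c).
Proof.
case/mxvec_indexP: c => i j; rewrite unvec_mxvec (ord1 i); congr pair.
by apply: val_inj => /=; rewrite r1.
Qed.

Lemma unvec2 n (c : 'I_(n * 1)) : unvec_index c = (cast_ord (muln1 n) c, ord0).
Proof.
case/mxvec_indexP: c => i j; rewrite unvec_mxvec (ord1 j); congr pair.
by apply: val_inj => /=; rewrite r2.
Qed.

Section Kron.
Context {R : realType} {n : nat}.
Implicit Types x y s : 'cV[R]_n.

Lemma kronvE x y c : kronv x y c 0 = x (unvec_index c).1 0 * y (unvec_index c).2 0.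
Proof.
rewrite /kronv castmxE /= /kron mxE.
rewrite cast_ord_id; case: (@unvec_index 1 1 _) => a b /=; by rewrite (ord1 a) (ord1 b).
Qed.

Lemma kronvDl x y z : kronv (x + y) z = kronv x z + kronv y z.
Proof. by apply/matrixP => c j; rewrite (ord1 j) !mxE !kronvE !mxE mulrDl. Qed.

Lemma kronvDr x y z : kronv x (y + z) = kronv x y + kronv x z.
Proof. by apply/matrixP => c j; rewrite (ord1 j) !mxE !kronvE !mxE mulrDr. Qed.

Lemma kron_vIE s y : kron_vI s *m y = kronv s y.
Proof.
apply/matrixP => c j; rewrite (ord1 j) kronvE mxE.
rewrite (eq_bigr (fun k => s (unvec_index c).1 0 * ((1%:M : 'M[R]_n) (unvec_index c).2 k * y k 0))).
  have h a : \sum_k (1%:M : 'M[R]_n) a k * y k 0 = y a 0 by have := congr1 (fun M : 'cV[R]_n => M a 0) (mul1mx y); rewrite /= mxE.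
  by rewrite -big_distrr /= h.
move=> k _; rewrite castmxE /= /kron mxE unvec1 /= cast_ordKV.
by rewrite cast_ord_id mulrA.
Qed.

Lemma kron_IvE s y : kron_Iv s *m y = kronv y s.
Proof.
apply/matrixP => c j; rewrite (ord1 j) kronvE mxE.
rewrite (eq_bigr (fun k => s (unvec_index c).2 0 * ((1%:M : 'M[R]_n) (unvec_index c).1 k * y k 0))).
  have h a : \sum_k (1%:M : 'M[R]_n) a k * y k 0 = y a 0 by have := congr1 (fun M : 'cV[R]_n => M a 0) (mul1mx y); rewrite /= mxE.
  by rewrite -big_distrr /= h mulrC.
move=> k _; rewrite castmxE /= /kron mxE unvec2 /= cast_ordKV.
by rewrite cast_ord_id mulrCA mulrA [_ * s _ _]mulrC.
Qed.

Lemma enorm_kronv x : enorm (kronv x x) = enorm x ^+ 2.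
Proof.
rewrite enorm_sq enormE.
have -> : dot (kronv x x) (kronv x x) = dot x x ^+ 2.
  pose F := fun p : 'I_n * 'I_n => x p.1 0 * x p.1 0 * (x p.2 0 * x p.2 0).
  have -> : dot (kronv x x) (kronv x x) = \sum_c F (unvec_index c).
    by apply: eq_bigr => c _; rewrite kronvE /F /=; ring.
  rewrite sum_unvec expr2 /dot big_distrl /=; apply: eq_bigr => i _.
  by rewrite big_distrr.
by rewrite sqrtr_sqr ger0_norm // dot_ge0.
Qed.

End Kron.

Section Anal.
Context {R : realType} {n : nat}.

Lemma lip_cont (g : 'cV[R]_n -> R) (L : R) :
  (forall a b, `|g a - g b| <= L * `|a - b|) -> continuous g.
Proof.
move=> h x s /nbhs_ballP [e e0 es]; apply/nbhs_ballP.
have L'p : 0 < `|L| + 1 by rewrite ltr_wpDl.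
exists (e / (`|L| + 1)); first exact: divr_gt0.
move=> t; rewrite -ball_normE /= => ht; apply: es; rewrite -ball_normE /=.
apply: (le_lt_trans (h x t)).
have d0 : 0 <= `|x - t| by [].
apply: (@le_lt_trans _ _ ((`|L| + 1) * `|x - t|)).
  by rewrite ler_wpM2r // (le_trans (real_ler_norm _)) ?num_real // lerDl.
by rewrite -ltr_pdivlMl // mulrC.
Qed.

Lemma enorm_cont : continuous (@enorm R n 1).
Proof.
apply: (@lip_cont _ n%:R) => a b.
apply: le_trans (enormB_ge a b) _; exact: enorm_le_mx.
Qed.

Lemma dot_cont (u : 'cV[R]_n) : continuous (dot u).
Proof.
apply: (@lip_cont _ (enorm u * n%:R)) => a b.
rewrite -(dotBr u a b) (le_trans (CSabs _ _)) // -mulrA ler_wpM2l ?enorm_ge0 //.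
exact: enorm_le_mx.
Qed.

Lemma is_derive_dot (u : 'cV[R]_n) (f : R -> 'cV[R]_n) t :
  derivable f t 1 -> is_derive t (1 : R) (fun s => dot u (f s)) (dot u ('D_1 f t)).
Proof.
move=> df.
have H := continuous_cvg _ (dot_cont u ('D_1 f t)) df.
have E : (dot u \o (fun h : R => h^-1 *: ((f \o shift t) (h *: 1) - f t))) =
   (fun h : R => h^-1 *: (((fun s => dot u (f s)) \o shift t) (h *: 1) - dot u (f t))).
  by apply/funext => h /=; rewrite dotC dotZl dotC dotBr. Show.
rewrite E in H.
have H' := H _.
apply: DeriveDef; first by apply/cvg_ex; exists (dot u ('D_1 f t)); exact: H'.
rewrite /derive; apply: cvg_lim; last exact: H'. exact: norm_hausdorff.
Qed.

End Anal.

Section Boot.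
Context {R : realType} {n : nat}.
Variable v : R -> 'cV[R]_n.
Variable D : R.
Hypothesis D0 : 0 < D.
Hypothesis vc : {within `[0, +oo[, continuous v}.
Hypothesis vd : forall t, 0 < t -> derivable v t 1.
Hypothesis vb : forall t, 0 < t -> enorm (v t) <= 1 -> enorm ('D_1 v t) <= D.
Hypothesis v0 : v 0 = 0.

Lemma comp_within {g : 'cV[R]_n -> R} : continuous g ->
  {within `[0, +oo[, continuous (fun s => g (v s))}.
Proof. by move=> gc x; apply: continuous_comp; [exact: vc | exact: gc]. Qed.

Lemma stepA t : 0 < t -> (forall s, 0 < s < t -> enorm (v s) <= 1) ->
  enorm (v t) <= t * D.
Proof.
move=> t0 hs.
have [e0|e0] := eqVneq (enorm (v t)) 0.
  by rewrite e0 mulr_ge0 // ?ltW.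
have ep : 0 < enorm (v t) by rewrite lt_neqAle eq_sym e0 enorm_ge0.
set u := (enorm (v t))^-1 *: v t.
have hu : enorm u = 1 by rewrite /u enormZ ger0_norm ?invr_ge0 ?enorm_ge0 // mulVf.
have gc : {within `[0, t], continuous (fun s => dot u (v s))}.
  have sub : `[0, t] `<=` `[0, +oo[.
    by move=> s /=; rewrite !in_itv /= => /andP[-> _].
  exact: (continuous_subspaceW sub (comp_within (dot_cont u))).
have hder : forall x, x \in `]0, t[%R -> is_derive x 1 (fun s => dot u (v s)) (dot u ('D_1 v x)).
  by move=> x; rewrite in_itv /= => /andP[x0 _]; exact: (is_derive_dot u v x (vd _ x0)).
have [c /[!in_itv] /= /andP [c0 ct] E] := MVT t0 hder gc.
move: E; rewrite v0 dot0r subr0 subr0 {1}/u dotZl -enorm_sq expr2 mulKf //.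
move=> ->; rewrite mulrC ler_pM2l //.
apply: le_trans (CS u _) _; rewrite hu mul1r; apply: vb => //.
by apply: hs; rewrite c0 ct.
Qed.
Lemma boot t : 0 <= t < 1 / D -> enorm (v t) <= t * D.
Proof.
move=> /andP[t0 tD].
have tD1 : t * D < 1 by move: tD; rewrite ltr_pdivlMr.
have Kc : {within `[0, +oo[, continuous (fun s => enorm (v s))} := comp_within enorm_cont.
have claim : forall s, 0 <= s <= t -> enorm (v s) < 1.
  pose S := [set s | (0 <= s <= t) /\ 1 <= enorm (v s)].
  have [SN|S0] := pselect (S !=set0); last first.
    by move=> s hs; rewrite ltNge; apply/negP => h; apply: S0; exists s.
  exfalso.
  have lbS : has_lbound S by exists 0 => s [/andP[h _] _].
  pose m := inf S.
  have mS : forall s, S s -> m <= s := ge_inf lbS.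
  have m0 : 0 <= m by apply: lb_le_inf => // s [/andP[h _] _].
  have [s0 Ss0] := SN.
  have mt : m <= t by apply: le_trans (mS _ Ss0) _; case: Ss0 => /andP[_ ->].
  have below : forall s, 0 <= s < m -> enorm (v s) < 1.
    move=> s /andP[s0' sm]; rewrite ltNge; apply/negP => h.
    have : S s by split => //; rewrite s0' /= (le_trans (ltW sm) mt).
    by move/mS; rewrite leNgt sm.
  have [Km|Km] := ltP (enorm (v m)) 1.
  - have /subspace_continuousP hK := Kc.
    have mA : `[0, +oo[%classic m by rewrite /= in_itv /= andbT.
    have := hK m mA.
    move/cvgrPdist_lt/(_ (1 - enorm (v m))); rewrite subr_gt0 => /(_ Km).
    rewrite near_withinE => /nbhs_ballP [d d0 hd].
    have : m + d <= m.
      apply: lb_le_inf SN _ => s Ss; rewrite leNgt; apply/negP => sd.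
      have ms := mS _ Ss.
      case: Ss => /andP[s0' _] h1.
      have bs : ball m d s by rewrite -ball_normE /= ltr_norml; apply/andP; split; lra.
      have := hd s bs; rewrite /= in_itv /= s0' => /(_ isT).
      rewrite /from_subspace ltr_norml => /andP[h2 h3]; lra.
    move: d0 => /= d0 h; lra.
  - have mp : 0 < m.
      rewrite lt_neqAle m0 andbT; apply/eqP => m0'.
      by move: Km; rewrite -m0' v0 enorm0 ler10.
    have h2 : enorm (v m) <= m * D.
      apply: (stepA m mp) => s /andP[h3 h4]; apply: ltW; apply: below; by rewrite (ltW h3) h4.
    have h5 : m * D <= t * D by rewrite ler_pM2r.
    lra.
move: (t0); rewrite le_eqVlt => /orP[/eqP tz|tp']; first by rewrite -tz v0 enorm0 mul0r.
apply: (stepA t tp') => s /andP[h1 h2]; apply: ltW; apply: claim; by rewrite (ltW h1) (ltW h2).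
Qed.

End Boot.
Theorem lemma9 (R : realType) (n : nat) (F2 : 'M[R]_(n, n * n))
  (F1 : 'M[R]_n) (F0 : 'cV[R]_n) (x : R -> 'cV[R]_n) :
  {within `[0, +oo[, continuous x} ->
  (forall t : R, 0 < t -> derivable x t 1 /\
     'D_1 x t = F2 *m kronv (x t) (x t)
                + F1 *m x t + F0) ->
  let s := x 0 in
  let v := fun t : R => x t - s in
  let C := opnorm (F2s F2) + opnorm (F1s F2 F1 s) + enorm (F0s F2 F1 F0 s) in
  (forall t : R, 0 < t -> derivable v t 1 /\
     'D_1 v t = F2s F2 *m kronv (v t) (v t)
                + F1s F2 F1 s *m v t + F0s F2 F1 F0 s) /\
  v 0 = 0 /\
  (exists t' : R, 0 < t' /\ forall t : R, 0 <= t <= t' -> enorm (v t) <= 1) /\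
  (0 < C -> forall t : R, 0 <= t < 1 / C ->
     enorm (v t) <= t * C /\ t * C < 1).
Proof.
move=> xc xd s v C.
have hvd : forall t, 0 < t -> derivable v t 1 /\ 'D_1 v t = 'D_1 x t.
  move=> t t0; have [dx _] := xd t t0.
  have dc : derivable (cst s) t 1 := derivable_cst s t 1.
  split; first exact: derivableB.
  by rewrite /v deriveB // derive_cst subr0.
have P1 : forall t : R, 0 < t -> derivable v t 1 /\
     'D_1 v t = F2s F2 *m kronv (v t) (v t)
                + F1s F2 F1 s *m v t + F0s F2 F1 F0 s.
  move=> t t0; have [dv ->] := hvd t t0; split => //.
  have [_ ->] := xd t t0.
  have -> : x t = v t + s by rewrite /v subrK.
  rewrite /F2s /F1s /F0s.
  move: (v t) => a.
  rewrite kronvDl !kronvDr mulmxDl mulmxDr -mulmxA mulmxDl kron_vIE kron_IvE.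
  rewrite !mulmxDr.
  move: (F2 *m kronv a a) (F2 *m kronv a s) (F2 *m kronv s a) (F2 *m kronv s s) (F1 *m a) (F1 *m s) => A B C' D E G.
  by apply/matrixP => i j; rewrite !mxE; ring.
split => //.
split; first by rewrite /v subrr.
have vc : {within `[0, +oo[, continuous v}.
  move=> t; apply: (@continuousB _ _ _ (from_subspace _ x) (cst s)); first exact: xc.
  exact: cst_continuous.
have vd : forall t, 0 < t -> derivable v t 1 by move=> t t0; case: (hvd t t0).
have v0 : v 0 = 0 by rewrite /v subrr.
have C0 : 0 <= C by rewrite /C !addr_ge0 ?opnorm_ge0 ?enorm_ge0.
have vb : forall t, 0 < t -> enorm (v t) <= 1 -> enorm ('D_1 v t) <= C.
  move=> t t0 h1; have [_ ->] := P1 t t0.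
  have e0 := enorm_ge0 (v t).
  apply: le_trans (enormD _ _) _; rewrite /C lerD2r.
  apply: le_trans (enormD _ _) _; apply: lerD.
    apply: le_trans (opnorm_bound _ _) _; rewrite enorm_kronv.
    rewrite -[leRHS]mulr1 ler_wpM2l ?opnorm_ge0 //.
    by rewrite expr2 -[1]mulr1 ler_pM.
  apply: le_trans (opnorm_bound _ _) _.
  by rewrite -[leRHS]mulr1 ler_wpM2l ?opnorm_ge0.
split.
  pose D := C + 1.
  have D0 : 0 < D by rewrite /D ltr_wpDl.
  have vbD : forall t, 0 < t -> enorm (v t) <= 1 -> enorm ('D_1 v t) <= D.
    by move=> t t0 h; apply: le_trans (vb t t0 h) _; rewrite /D lerDl.
  exists (1 / (2 * D)); split; first by rewrite divr_gt0 // mulr_gt0.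
  move=> t /andP[t0 tD].
  have tD' : t < 1 / D.
    apply: le_lt_trans tD _; rewrite ltr_pM2l // ltf_pV2 ?posrE ?mulr_gt0 //.
    lra.
  have := @boot R n v D D0 vc vd vbD v0 t; rewrite t0 tD' => /(_ isT) h.
  apply: le_trans h _.
  have : t * D <= 1 / (2 * D) * D by rewrite ler_pM2r.
  rewrite mul1r invfM -mulrA mulVf ?gt_eqF // mulr1 => h.
  apply: le_trans h _; rewrite invf_le1 //; lra.
move=> Cp t /andP[t0 tC].
have := @boot R n v C Cp vc vd vb v0 t; rewrite t0 tC => /(_ isT) h.
by split => //; move: tC; rewrite ltr_pdivlMr.
Qed.
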